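(* Let $Y$ be a nominal $\mathrm{Sb}$-set and let $y\in Y$ be supported by a set of cardinality at most $1$. Then $\{m\cdot y\mid m\in\mathrm{Sb}\}=\{g\cdot y\mid g\in\mathrm{Perm}\}$.
   Context: $\mathbb{A}$ is a countably infinite set of atoms; $\mathrm{Sb}$ is the monoid of functions $\mathbb{A}\to\mathbb{A}$ that are the identity outside a finite set; $\mathrm{Perm}\subseteq\mathrm{Sb}$ its bijections. An $\mathrm{Sb}$-set has a monoid action of $\mathrm{Sb}$; $C\subseteq\mathbb{A}$ supports $y$ if for all $m_1,m_2\in\mathrm{Sb}$ with $m_1|_C=m_2|_C$ we have $m_1y=m_2y$; a nominal $\mathrm{Sb}$-set is one in which every element has a finite support. *)

(* Defs.v *)
From mathcomp Require Import all_boot.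
Set Implicit Arguments. Unset Strict Implicit. Unset Printing Implicit Defensive.

Definition atom := nat.

Definition is_sb (m : atom -> atom) : Prop :=
  exists s : seq atom, forall a, a \notin s -> m a = a.

Definition is_perm (m : atom -> atom) : Prop := is_sb m /\ bijective m.

Record SbSet := {
  sb_carrier :> Type;
  sb_act : (atom -> atom) -> sb_carrier -> sb_carrier;
  sb_act_id : forall y, sb_act id y = y;
  sb_act_comp : forall m1 m2 y, is_sb m1 -> is_sb m2 ->
     sb_act (m1 \o m2) y = sb_act m1 (sb_act m2 y)
}.

Definition supports (Y : SbSet) (C : atom -> Prop) (y : Y) : Prop :=
  forall m1 m2, is_sb m1 -> is_sb m2 ->
    (forall a, C a -> m1 a = m2 a) -> sb_act m1 y = sb_act m2 y.

Definition nominal (Y : SbSet) : Prop :=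
  forall y : Y, exists s : seq atom, supports (fun a => a \in s) y.

Definition card_le1 (C : atom -> Prop) : Prop :=
  forall a b, C a -> C b -> a = b.

(* Main.v *)
Require Import Defs.
From mathcomp Require Import all_boot.
From Stdlib Require Import Classical.

Definition swp (a b : atom) (x : atom) : atom :=
  if x == a then b else if x == b then a else x.

Lemma swpK a b : involutive (swp a b).
Proof.
move=> x; rewrite /swp.
case: (eqVneq x a) => [->|xa].
  by rewrite eqxx; case: (eqVneq b a) => [->|ba]; rewrite ?eqxx.
case: (eqVneq x b) => [->|xb]; first by rewrite eqxx.
by rewrite (negPf xa) (negPf xb).
Qed.

Lemma swp_perm a b : is_perm (swp a b).
Proof.
split; last exact: (inv_inj (swpK a b)) || exact: (Bijective (swpK a b) (swpK a b)).
exists [:: a; b] => x; rewrite !inE negb_or => /andP [xa xb].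
by rewrite /swp (negPf xa) (negPf xb).
Qed.

Theorem mainTheorem13 (Y : SbSet) (hY : nominal Y) (y : Y)
  (C : atom -> Prop) (hC : card_le1 C) (hsupp : supports C y) :
  forall z : Y,
    (exists m, is_sb m /\ z = sb_act m y) <->
    (exists g, is_perm g /\ z = sb_act g y).
Proof.
move=> z; split; last first.
  by move=> [g [[sg _] ->]]; exists g.
move=> [m [sm ->]].
have idsb : is_sb id by exists [::].
case: (classic (exists a, C a)) => [[a Ca]|nC].
  exists (swp a (m a)); split; first exact: swp_perm.
  have [sp _] := swp_perm a (m a).
  apply: hsupp => // x Cx; rewrite (hC _ _ Cx Ca) /swp eqxx //.
exists id; split; first by split => //; exists id.
apply: hsupp => // x Cx; exfalso; apply: nC; by exists x.
Qed.
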